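(* Let $f$ be a strongly hyperbolic function, $b>0$ and $s,t\neq0$. Then: (1) $\lim_{x\to\infty}\frac{f'(x)}{f'(x+b)}=1$; (2) $\lim_{x\to+\infty}\frac{f'(x)}{f(x)}=0$; (3) $\lim_{x\to+\infty}\frac{f(x+s)-f(x)}{f'(x)}=s$; (4) $\lim_{x\to+\infty}\frac{f(x+s)-f(x)}{f(x+t)-f(x)}=\frac{s}{t}$; (5) $\liminf_{x\to0+}\frac{f'(x)}{f(x)}=-\infty$.
   Context: $\mathbb{R}^+=(0,\infty)$. A function $f:\mathbb{R}^+\to\mathbb{R}^+$ is strongly hyperbolic if: (1) $\lim_{x\to0+}f(x)=+\infty$ and $\lim_{x\to+\infty}f(x)=0$; (2) $f$ is strictly convex; (3) for each $b\in\mathbb{R}$, $\lim_{x\to+\infty}f(x+b)/f(x)=1$; (4) $f$ is differentiable; (5) $x\mapsto\ln|f'(x)|$ is strictly convex. *)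

(* Defs.v *)
From Stdlib Require Import Reals.
From Coquelicot Require Import Coquelicot.
Open Scope R_scope.

Definition strictly_convex_pos (g : R -> R) : Prop :=
  forall x y l : R, 0 < x -> 0 < y -> x <> y -> 0 < l < 1 ->
    g (l * x + (1 - l) * y) < l * g x + (1 - l) * g y.

(* f : R^+ -> R^+ is represented by f : R -> R; values at x <= 0 are irrelevant.
   Strongly hyperbolic, conditions (0)-(5) of the paper. *)
Definition strongly_hyperbolic (f : R -> R) : Prop :=
  (forall x, 0 < x -> 0 < f x) /\
  filterlim f (at_right 0) (Rbar_locally p_infty) /\
  is_lim f p_infty 0 /\
  strictly_convex_pos f /\
  (forall b : R, is_lim (fun x => f (x + b) / f x) p_infty 1) /\
  (forall x, 0 < x -> ex_derive f x) /\
  strictly_convex_pos (fun x => ln (Rabs (Derive f x))).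

Definition liminf_at_right0_is_minfty (g : R -> R) : Prop :=
  forall (M delta : R), 0 < delta -> exists x, 0 < x < delta /\ g x < M.

(* Main.v *)
Require Import Defs.
From Stdlib Require Import Reals Lra Psatz Classical.
From Coquelicot Require Import Coquelicot.
Open Scope R_scope.

Lemma mono_le (h h' : R -> R) (a b : R) : a <= b ->
  (forall c, a <= c <= b -> derivable_pt_lim h c (h' c)) ->
  (forall c, a <= c <= b -> 0 <= h' c) -> h a <= h b.
Proof.
  intros Hab Hd Hp. destruct (Req_dec a b) as [E|E]. subst; lra.
  destruct (MVT_cor3 h h' a b) as [c [H1 [H2 H3]]]; [lra| intros; apply Hd; lra |].
  rewrite H3. assert (0 <= h' c) by (apply Hp; lra). nra.
Qed.

Lemma tangent (f : R -> R) : strictly_convex_pos f -> (forall x, 0 < x -> ex_derive f x) ->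
  forall x y, 0 < x -> 0 < y -> f y >= f x + Derive f x * (y - x).
Proof.
  intros Hc Hd x y Hx Hy.
  destruct (Req_dec x y) as [E|E]. { subst. lra. }
  apply Rnot_lt_ge; intro Hlt.
  set (D := Derive f x) in *.
  set (del := f x + D * (y - x) - f y).
  assert (Hdel : 0 < del) by (unfold del; lra).
  assert (Hyx : 0 < Rabs (y - x)) by (apply Rabs_pos_lt; lra).
  assert (HD : derivable_pt_lim f x D) by (apply is_derive_Reals; apply Derive_correct; auto).
  destruct (HD (del / Rabs (y - x))) as [d Hd0].
  { apply Rdiv_lt_0_compat; lra. }
  set (l := Rmin (1/2) (d / (2 * Rabs (y - x)))).
  assert (Hdp : 0 < d) by apply cond_pos.
  assert (Hl0 : 0 < l).
  { unfold l. apply Rmin_pos. lra. apply Rdiv_lt_0_compat; lra. }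
  assert (Hl1 : l < 1). { unfold l. pose proof (Rmin_l (1/2) (d / (2 * Rabs (y - x)))). lra. }
  assert (Hl2 : l * Rabs (y - x) < d).
  { unfold l. pose proof (Rmin_r (1/2) (d / (2 * Rabs (y - x)))).
    assert (d / (2 * Rabs (y - x)) * Rabs (y - x) = d / 2) by (field; lra).
    nra. }
  set (h := l * (y - x)).
  assert (Hh0 : h <> 0). { unfold h. intro H0. apply Rmult_integral in H0. lra. }
  assert (Habsh : Rabs h = l * Rabs (y - x)).
  { unfold h. rewrite Rabs_mult, Rabs_pos_eq; lra. }
  specialize (Hd0 h Hh0 ltac:(lra)).
  pose proof (Hc y x l Hy Hx (not_eq_sym E) (conj Hl0 Hl1)) as Hcv.
  assert (Earg : l * y + (1 - l) * x = x + h) by (unfold h; ring).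
  rewrite Earg in Hcv.
  assert (Hm : Rabs (f (x + h) - f x - h * D) = Rabs h * Rabs ((f (x + h) - f x) / h - D)).
  { rewrite <- Rabs_mult. f_equal. field. auto. }
  assert (Hm2 : Rabs (f (x + h) - f x - h * D) < l * del).
  { rewrite Hm, Habsh.
    assert (l * Rabs (y - x) * (del / Rabs (y - x)) = l * del) by (field; lra).
    rewrite <- H. apply Rmult_lt_compat_l. nra. auto. }
  apply Rabs_def2 in Hm2. destruct Hm2 as [_ Hm2].
  assert (h * D = l * (D * (y - x))) by (unfold h; ring).
  unfold del in *. nra.
Qed.


Lemma lim_pinf (g : R -> R) (l : R) : is_lim g p_infty l ->
  forall eps, 0 < eps -> exists M, forall x, M < x -> Rabs (g x - l) < eps.
Proof.
  intros H eps He. apply is_lim_spec in H. destruct (H (mkposreal eps He)) as [M HM].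
  exists M. intros. apply HM. auto.
Qed.

Lemma lim_pinf_intro (g : R -> R) (l : R) :
  (forall eps, 0 < eps -> exists M, forall x, M < x -> Rabs (g x - l) < eps) -> is_lim g p_infty l.
Proof.
  intros H. apply is_lim_spec. intros eps. destruct (H eps (cond_pos eps)) as [M HM].
  exists M. auto.
Qed.

Section SH.
Variable f : R -> R.
Hypothesis Hpos : forall x, 0 < x -> 0 < f x.
Hypothesis Hlim : is_lim f p_infty 0.
Hypothesis Hc : strictly_convex_pos f.
Hypothesis Hrat : forall b : R, is_lim (fun x => f (x + b) / f x) p_infty 1.
Hypothesis Hd : forall x, 0 < x -> ex_derive f x.
Hypothesis Hg : strictly_convex_pos (fun x => ln (Rabs (Derive f x))).

Lemma fpneg x : 0 < x -> Derive f x < 0.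
Proof.
  intros Hx. apply Rnot_le_lt. intro H0.
  destruct (lim_pinf _ _ Hlim (f x) (Hpos x Hx)) as [M HM].
  set (y := Rmax M x + 1).
  assert (M < y /\ x < y) by (unfold y; pose proof (Rmax_l M x); pose proof (Rmax_r M x); lra).
  specialize (HM y ltac:(lra)). rewrite Rminus_0_r in HM.
  pose proof (tangent f Hc Hd x y Hx ltac:(lra)).
  pose proof (Rle_abs (f y)). nra.
Qed.

Lemma fpmono x y : 0 < x -> x <= y -> Derive f x <= Derive f y.
Proof.
  intros Hx Hxy.
  pose proof (tangent f Hc Hd x y Hx ltac:(lra)).
  pose proof (tangent f Hc Hd y x ltac:(lra) Hx).
  destruct (Req_dec x y). subst; lra. nra.
Qed.

Lemma fdecr x y : 0 < x -> x <= y -> f y <= f x.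
Proof.
  intros Hx Hxy. pose proof (tangent f Hc Hd y x ltac:(lra) Hx).
  pose proof (fpneg y ltac:(lra)). nra.
Qed.

Lemma qge1 b x : 0 < b -> 0 < x -> 1 <= Derive f x / Derive f (x + b).
Proof.
  intros Hb Hx. pose proof (fpmono x (x+b) Hx ltac:(lra)). pose proof (fpneg (x+b) ltac:(lra)).
  set (u := Derive f x) in *. set (v := Derive f (x+b)) in *. set (w := u / v).
  assert (w * v = u) by (unfold w; field; lra). nra.
Qed.

Lemma qmono b x y : 0 < b -> 0 < x -> x < y ->
  Derive f y / Derive f (y + b) < Derive f x / Derive f (x + b).
Proof.
  intros Hb Hx Hxy.
  set (D := y + b - x).
  set (l := b / D).
  assert (HD : 0 < D) by (unfold D; lra).
  assert (Hl : 0 < l < 1). { unfold l. split. apply Rdiv_lt_0_compat; lra.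
    assert (b / D = 1 - (y - x) / D) by (unfold D; field; lra). assert (0 < (y - x) / D) by (apply Rdiv_lt_0_compat; lra). lra. }
  pose proof (Hg x (y + b) l Hx ltac:(lra) ltac:(lra) Hl) as H1.
  pose proof (Hg x (y + b) (1 - l) Hx ltac:(lra) ltac:(lra) ltac:(lra)) as H2.
  assert (E1 : l * x + (1 - l) * (y + b) = y) by (unfold l, D; field; lra).
  assert (E2 : (1 - l) * x + (1 - (1 - l)) * (y + b) = x + b) by (unfold l, D; field; lra).
  rewrite E1 in H1. rewrite E2 in H2. simpl in H1, H2.
  pose proof (fpneg x Hx) as N1. pose proof (fpneg y ltac:(lra)) as N2.
  pose proof (fpneg (x+b) ltac:(lra)) as N3. pose proof (fpneg (y+b) ltac:(lra)) as N4.
  set (a1 := Derive f x) in *. set (a2 := Derive f y) in *.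
  set (a3 := Derive f (x+b)) in *. set (a4 := Derive f (y+b)) in *.
  rewrite !Rabs_left in H1, H2 by lra.
  assert (Hs : ln (- a2) + ln (- a3) < ln (- a1) + ln (- a4)) by lra.
  rewrite <- !ln_mult in Hs by lra.
  apply ln_lt_inv in Hs; [| nra | nra].
  assert (a2 / a4 - a1 / a3 = (a2 * a3 - a1 * a4) / (a3 * a4)) by (field; lra).
  assert ((a2 * a3 - a1 * a4) / (a3 * a4) < 0).
  { apply Rdiv_neg_pos. nra. nra. }
  lra.
Qed.

Lemma P1 b : 0 < b -> forall eps, 0 < eps ->
  exists M, 0 < M /\ forall x, M < x -> Derive f x / Derive f (x + b) < 1 + eps.
Proof.
  intros Hb eps He. set (K := 1 + eps).
  destruct (classic (exists y, 0 < y /\ Derive f y / Derive f (y + b) < K)) as [[y [Hy Hq]]|Hn].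
  { exists y. split; auto. intros x Hx. pose proof (qmono b y x Hb Hy Hx). fold K. lra. }
  exfalso.
  assert (HK : forall y, 0 < y -> K <= Derive f y / Derive f (y + b)).
  { intros y Hy. apply Rnot_lt_le. intro. apply Hn. eauto. }
  set (h := fun z => f (z + b) - f z / K).
  assert (Hh : forall y z, 0 < y -> y <= z -> h y <= h z).
  { intros y z Hy Hyz. apply (mono_le h (fun z => Derive f (z + b) - Derive f z / K)); auto.
    - intros c Hc0. apply is_derive_Reals. unfold h. auto_derive.
      split. apply Hd; lra. split. apply Hd; lra. auto.
      change (Derive (fun x => f x)) with (Derive f). unfold Rdiv; ring.
    - intros c Hc0. specialize (HK c ltac:(lra)).
      pose proof (fpneg (c+b) ltac:(lra)). pose proof (fpneg c ltac:(lra)).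
      set (u := Derive f c) in *. set (v := Derive f (c+b)) in *.
      set (w := u / v) in *. assert (w * v = u) by (unfold w; field; lra).
      assert (u / K = u * / K) by reflexivity.
      assert (/ K * K = 1) by (field; unfold K; lra).
      assert (0 < / K) by (apply Rinv_0_lt_compat; unfold K; lra).
      assert (u <= K * v) by nra.
      assert (u * / K <= K * v * / K) by (apply Rmult_le_compat_r; lra).
      assert (K * v * / K = v) by (field; unfold K; lra).
      simpl. lra. }
  assert (Hh0 : forall y, 0 < y -> h y <= 0).
  { intros y Hy. apply Rnot_lt_le. intro Hp.
    destruct (lim_pinf _ _ Hlim (h y) Hp) as [M HM].
    set (z := Rmax M y + 1).
    assert (M < z /\ y < z) by (unfold z; pose proof (Rmax_l M y); pose proof (Rmax_r M y); lra).
    specialize (HM (z + b) ltac:(lra)). rewrite Rminus_0_r in HM.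
    pose proof (Hh y z Hy ltac:(lra)). unfold h in H0 at 2.
    pose proof (Hpos z ltac:(lra)).
    assert (0 < / K) by (apply Rinv_0_lt_compat; unfold K; lra).
    assert (f z / K = f z * / K) by reflexivity.
    pose proof (Rle_abs (f (z + b))). nra. }
  destruct (lim_pinf _ _ (Hrat b) (eps / K)) as [M HM].
  { apply Rdiv_lt_0_compat; unfold K; lra. }
  set (x := Rmax M 1 + 1).
  assert (M < x /\ 1 < x) by (unfold x; pose proof (Rmax_l M 1); pose proof (Rmax_r M 1); lra).
  specialize (HM x ltac:(lra)). specialize (Hh0 x ltac:(lra)). unfold h in Hh0.
  pose proof (Hpos x ltac:(lra)).
  apply Rabs_def2 in HM. destruct HM as [_ HM].
  assert (f (x + b) / f x <= 1 / K).
  { unfold Rdiv. apply (Rmult_le_reg_r (f x)); auto. rewrite Rmult_assoc, Rinv_l by lra.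
    assert (f x / K = 1 * / K * f x) by (unfold Rdiv; ring). lra. }
  assert (1 / K = 1 - eps / K) by (unfold K; field; lra).
  lra.
Qed.

Lemma Rlim s : forall eps, 0 < eps ->
  exists M, 0 < M /\ forall x, M < x -> 0 < x + s /\ Rabs (Derive f (x + s) / Derive f x - 1) < eps.
Proof.
  intros eps He.
  destruct (Rtotal_order s 0) as [Hs|[Hs|Hs]].
  - destruct (P1 (- s) ltac:(lra) eps He) as [M [HM0 HM]].
    exists (M - s). split. lra. intros x Hx. split. lra.
    specialize (HM (x + s) ltac:(lra)). replace (x + s + - s) with x in HM by ring.
    pose proof (qge1 (- s) (x + s) ltac:(lra) ltac:(lra)). replace (x + s + - s) with x in H by ring.
    rewrite Rabs_pos_eq; lra.
  - subst. exists 1. split. lra. intros x Hx. split. lra.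
    rewrite Rplus_0_r. unfold Rdiv. rewrite Rinv_r. rewrite Rminus_eq_0, Rabs_R0. lra.
    pose proof (fpneg x ltac:(lra)). lra.
  - destruct (P1 s Hs eps He) as [M [HM0 HM]].
    exists M. split. lra. intros x Hx. split. lra.
    specialize (HM x Hx). pose proof (qge1 s x Hs ltac:(lra)).
    pose proof (fpneg x ltac:(lra)). pose proof (fpneg (x+s) ltac:(lra)).
    set (u := Derive f x) in *. set (v := Derive f (x+s)) in *.
    set (q := u / v) in *. 
    assert (v / u = / q) by (unfold q; field; lra).
    rewrite H2.
    assert (0 < / q) by (apply Rinv_0_lt_compat; lra).
    assert (/ q * q = 1) by (field; lra).
    rewrite Rabs_left1 by nra. nra.
Qed.

Lemma part2 : is_lim (fun x => Derive f x / f x) p_infty 0.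
Proof.
  apply lim_pinf_intro. intros eps He.
  destruct (lim_pinf _ _ (Hrat (-1)) eps He) as [M HM].
  exists (Rmax M 1). intros x Hx.
  pose proof (Rmax_l M 1). pose proof (Rmax_r M 1).
  specialize (HM x ltac:(lra)). apply Rabs_def2 in HM. destruct HM as [HM _].
  pose proof (tangent f Hc Hd x (x + -1) ltac:(lra) ltac:(lra)).
  pose proof (fpneg x ltac:(lra)). pose proof (Hpos x ltac:(lra)).
  set (D := Derive f x) in *. set (r := f (x + -1) / f x) in *.
  assert (r * f x = f (x + -1)) by (unfold r; field; lra).
  set (w := D / f x). assert (w * f x = D) by (unfold w; field; lra).
  rewrite Rminus_0_r. assert (w < 0) by nra.
  rewrite Rabs_left by lra. nra.
Qed.

Lemma part3 s : s <> 0 -> is_lim (fun x => (f (x + s) - f x) / Derive f x) p_infty s.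
Proof.
  intros Hs0. apply lim_pinf_intro. intros eps He.
  assert (Has : 0 < Rabs s) by (apply Rabs_pos_lt; auto).
  destruct (Rlim s (eps / Rabs s)) as [M [HM0 HM]].
  { apply Rdiv_lt_0_compat; lra. }
  exists M. intros x Hx. destruct (HM x Hx) as [Hxs Hr].
  pose proof (tangent f Hc Hd x (x + s) ltac:(lra) Hxs).
  pose proof (tangent f Hc Hd (x + s) x Hxs ltac:(lra)).
  pose proof (fpneg x ltac:(lra)).
  set (u := Derive f x) in *. set (v := Derive f (x + s)) in *.
  set (w := (f (x + s) - f x) / u).
  assert (Ew : w * u = f (x + s) - f x) by (unfold w; field; lra).
  set (r := v / u) in *. assert (Er : r * u = v) by (unfold r; field; lra).
  assert (H2 : w <= s) by nra.
  assert (H3 : s * r <= w) by nra.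
  assert (Rabs (w - s) <= Rabs s * Rabs (r - 1)).
  { rewrite <- Rabs_mult. rewrite (Rabs_left1 (w - s)) by lra.
    replace (s * (r - 1)) with (s * r - s) by ring.
    apply Rle_trans with (-(s * r - s)). lra. rewrite <- Rabs_Ropp. apply Rle_abs. }
  assert (Rabs s * Rabs (r - 1) < Rabs s * (eps / Rabs s)) by (apply Rmult_lt_compat_l; lra).
  assert (Rabs s * (eps / Rabs s) = eps) by (field; lra).
  lra.
Qed.

Lemma part4 s t : s <> 0 -> t <> 0 ->
  is_lim (fun x => (f (x + s) - f x) / (f (x + t) - f x)) p_infty (s / t).
Proof.
  intros Hs Ht.
  apply (is_lim_ext_loc (fun x => ((f (x + s) - f x) / Derive f x) / ((f (x + t) - f x) / Derive f x))).
  { exists (Rabs t). intros x Hx.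
    assert (0 <= Rabs t) by apply Rabs_pos.
    assert (0 < x + t) by (destruct (Rle_dec 0 t); [|rewrite Rabs_left in Hx by lra]; lra).
    pose proof (fpneg x ltac:(lra)). field.
    split; [|lra].
    intro E. destruct (Rtotal_order t 0) as [T|[T|T]]; [|lra|].
    - pose proof (tangent f Hc Hd x (x + t) ltac:(lra) ltac:(lra)). nra.
    - pose proof (tangent f Hc Hd (x + t) x ltac:(lra) ltac:(lra)). pose proof (fpneg (x + t) ltac:(lra)). nra. }
  apply (is_lim_div _ _ p_infty s t (part3 s Hs) (part3 t Ht)).
  - intro E. injection E. auto.
  - simpl. auto.
Qed.


Lemma part5 : filterlim f (at_right 0) (Rbar_locally p_infty) ->
  liminf_at_right0_is_minfty (fun x => Derive f x / f x).
Proof.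
  intros Hinf M del Hdel.
  destruct (classic (exists x, 0 < x < del /\ Derive f x / f x < M)) as [H|Hn]; auto.
  exfalso.
  assert (HK : forall x, 0 < x < del -> M <= Derive f x / f x).
  { intros x Hx. apply Rnot_lt_le. intro. apply Hn. eauto. }
  set (a := del / 2).
  set (k := fun x => ln (f x) - M * x).
  assert (Hk : forall x, 0 < x <= a -> k x <= k a).
  { intros x Hx. apply (mono_le k (fun x => Derive f x / f x - M)). lra.
    - intros c Hc0. apply is_derive_Reals. unfold k. auto_derive.
      split. apply Hd; lra. split. apply Hpos; lra. auto.
      change (Derive (fun x => f x)) with (Derive f). unfold Rdiv; ring.
    - intros c Hc0. specialize (HK c ltac:(unfold a in *; lra)). lra. }
  set (C := exp (ln (f a) + Rabs M * a)).
  pose proof (Hinf (fun y => C < y) (ex_intro _ C (fun y Hy => Hy))) as HC.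
  simpl in HC. destruct HC as [e He].
  set (y := Rmin a (e / 2)).
  assert (Hy0 : 0 < y). { unfold y. apply Rmin_pos. unfold a; lra. pose proof (cond_pos e). lra. }
  assert (Hya : y <= a) by (unfold y; apply Rmin_l).
  assert (Hye : y < e). { unfold y. pose proof (Rmin_r a (e/2)). pose proof (cond_pos e). lra. }
  assert (Hb : ball 0 e y).
  { unfold ball; simpl; unfold AbsRing_ball, abs, minus, plus, opp; simpl.
    rewrite Ropp_0, Rplus_0_r. rewrite Rabs_pos_eq; lra. }
  specialize (He y Hb Hy0). simpl in He.
  specialize (Hk y ltac:(lra)). unfold k in Hk.
  assert (ln (f y) <= ln (f a) + Rabs M * a).
  { assert (M * (y - a) <= Rabs M * a).
    { destruct (Rle_dec 0 M). rewrite Rabs_pos_eq by lra. unfold a in *. nra.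
      rewrite Rabs_left by lra. unfold a in *. nra. }
    lra. }
  assert (f y <= C).
  { unfold C. rewrite <- (exp_ln (f y)) by (apply Hpos; lra).
    destruct (Req_dec (ln (f y)) (ln (f a) + Rabs M * a)) as [E|E].
    rewrite E; lra. left. apply exp_increasing. lra. }
  lra.
Qed.

End SH.

Theorem lemma3p2 (f : R -> R) (b s t : R) :
  strongly_hyperbolic f -> 0 < b -> s <> 0 -> t <> 0 ->
  is_lim (fun x => Derive f x / Derive f (x + b)) p_infty 1 /\
  is_lim (fun x => Derive f x / f x) p_infty 0 /\
  is_lim (fun x => (f (x + s) - f x) / Derive f x) p_infty s /\
  is_lim (fun x => (f (x + s) - f x) / (f (x + t) - f x)) p_infty (s / t) /\
  liminf_at_right0_is_minfty (fun x => Derive f x / f x).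
Proof.
  intros [Hpos [Hinf [Hlim [Hc [Hrat [Hd Hg]]]]]] Hb Hs Ht.
  split; [|split; [|split; [|split]]].
  - apply lim_pinf_intro. intros eps He.
    destruct (P1 f Hpos Hlim Hc Hrat Hd Hg b Hb eps He) as [M [HM0 HM]].
    exists M. intros x Hx. specialize (HM x Hx).
    pose proof (qge1 f Hpos Hlim Hc Hd b x Hb ltac:(lra)).
    rewrite Rabs_pos_eq; lra.
  - apply part2; auto.
  - apply part3; auto.
  - apply part4; auto.
  - apply part5; auto.
Qed.
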